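(* Let $q=2^r$ with $r>1$ odd, and $n\ge 1$. Let $\alpha\in\mathbb{F}_q\setminus\{0,1\}$, and let $f\in\mathbb{F}_q[y]$ be a permutation polynomial of degree $q-2$. Then $$h(x_1,\dots,x_n,y)=\bigl(x_1^{q-1}\cdots x_n^{q-1}+\alpha\bigr)f(y)$$ is a permutation polynomial in $\mathbb{F}_q[x_1,\dots,x_n,y]$ of degree $n(q-1)+q-2$.
   Context: $\mathbb{F}_q$ is the finite field with $q$ elements. A polynomial in $m$ variables over $\mathbb{F}_q$ is a permutation polynomial (PP) if, for every $c\in\mathbb{F}_q$, the equation $h=c$ has exactly $q^{m-1}$ solutions in $\mathbb{F}_q^m$. A univariate PP is a polynomial inducing a bijection of $\mathbb{F}_q$. *)

(* Defs.v *)
From mathcomp Require Import all_boot all_algebra.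
From mathcomp Require Import mpoly.
Set Implicit Arguments. Unset Strict Implicit. Unset Printing Implicit Defensive.
Import GRing.Theory.
Local Open Scope ring_scope.

Definition is_univ_pp (F : finFieldType) (f : {poly F}) : Prop :=
  bijective (fun x : F => f.[x]).

Definition is_multi_pp (F : finFieldType) (m : nat) (h : {mpoly F[m]}) : Prop :=
  forall c : F,
    #|[set v : {ffun 'I_m -> F} | h.@[v] == c]| = (#|F| ^ m.-1)%N.

(* The polynomial (x_1^(q-1) ... x_n^(q-1) + alpha) f(y) in n+1 variables;
   x_i is 'X_i for i < n (lifted into 'I_(n+1)) and y is 'X_(ord_max). *)
Definition hpoly (F : finFieldType) (n : nat) (alpha : F) (f : {poly F})
  : {mpoly F[n.+1]} :=
  ((\prod_(i < n) 'X_(widen_ord (leqnSn n) i) ^+ (#|F|.-1)) + alpha%:MP)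
  * (map_poly (@mpolyC n.+1 F) f).['X_(@ord_max n)].

(* Main.v *)
Require Import Defs.
From mathcomp Require Import all_boot all_algebra all_field.
From mathcomp Require Import mpoly.
Set Implicit Arguments. Unset Strict Implicit. Unset Printing Implicit Defensive.
Import GRing.Theory.
Local Open Scope ring_scope.
Lemma eval_g (F : finFieldType) (n : nat) (f : {poly F}) (v : 'I_n.+1 -> F) :
  ((map_poly (@mpolyC n.+1 F) f).['X_(@ord_max n)]).@[v] = f.[v ord_max].
Proof.
rewrite -horner_map /= mevalXU -map_poly_comp.
rewrite (eq_map_poly (g := id)) ?map_poly_id // => x /=; exact: mevalC.
Qed.

Lemma pow_01 (F : finFieldType) (x : F) : x ^+ #|F|.-1 = (x != 0)%:R.
Proof.
have q1 : (0 < #|F|.-1)%N by have := finNzRing_gt1 F; case: #|F| => [|[]].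
case: eqP => [->|/eqP nz]; first by rewrite expr0n eqn0Ngt q1.
apply: (mulIf nz); rewrite -exprSr prednK ?expf_card ?mul1r //.
by have := finNzRing_gt1 F; case: #|F|.
Qed.
Definition Qf (F : finFieldType) n (u : 'I_n -> F) := \prod_(i < n) u i ^+ #|F|.-1.
Definition restr (F : finFieldType) n (v : {ffun 'I_n.+1 -> F}) : {ffun 'I_n -> F} :=
  [ffun j => v (widen_ord (leqnSn n) j)].

Lemma Qf01 (F : finFieldType) n (u : 'I_n -> F) : Qf u = 0 \/ Qf u = 1.
Proof.
rewrite /Qf; apply: (big_ind (fun x => x = 0 \/ x = 1)); first by right.
  by move=> x y [->|->] [->|->]; rewrite ?mul0r ?mulr0 ?mul1r; auto.
by move=> i _; rewrite pow_01; case: (_ != 0); auto.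
Qed.

Lemma eval_h (F : finFieldType) n alpha (f : {poly F}) (v : {ffun 'I_n.+1 -> F}) :
  (hpoly n alpha f).@[v] = (Qf (restr v) + alpha) * f.[v ord_max].
Proof.
rewrite /hpoly rmorphM rmorphD /= eval_g mevalC rmorph_prod /=; congr ((_ + _) * _).
by apply: eq_bigr => i _; rewrite rmorphXn /= mevalXU ffunE.
Qed.

Lemma lift_widen n (j : 'I_n) : lift ord_max j = widen_ord (leqnSn n) j.
Proof. by apply: val_inj; rewrite /= /bump leqNgt ltn_ord. Qed.

Lemma pp_part (F : finFieldType) n alpha (f : {poly F}) :
  1 + alpha != 0 -> alpha != 0 -> is_univ_pp f -> is_multi_pp (hpoly n alpha f).
Proof.
move=> h1 h0 [g fK gK] c.
have nz (u : 'I_n -> F) : Qf u + alpha != 0.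
  by case: (Qf01 u) => ->; rewrite ?add0r.
set S := [set v | _].
have inj : {in S &, injective (@restr F n)}.
  move=> v w; rewrite !inE => /eqP hv /eqP hw e.
  have ey : v ord_max = w ord_max.
    apply: (can_inj fK); apply: (mulfI (nz (restr v))).
    by rewrite -eval_h hv e -eval_h hw.
  apply/ffunP => i; case: (unliftP ord_max i) => [j ->|->] //.
  by have := congr1 (fun u : {ffun 'I_n -> F} => u j) e; rewrite !ffunE lift_widen.
have surj : (@restr F n) @: S = setT.
  apply/setP => x; rewrite inE; apply/imsetP.
  pose y0 := g (c / (Qf x + alpha)).
  pose v := [ffun i => if unlift ord_max i is Some j then x j else y0].
  have rv : restr v = x.
    by apply/ffunP => j; rewrite !ffunE -lift_widen liftK.
  exists v => //; rewrite inE eval_h rv ffunE unlift_none /y0 gK.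
  by rewrite mulrC divfK.
by rewrite -(card_in_imset inj) surj cardsT card_ffun card_ord.
Qed.
Lemma msize_XC (F : fieldType) n (m : 'X_{1..n}) (c : F) : (0 < mdeg m)%N ->
  msize ('X_[m] + c%:MP) = (mdeg m).+1.
Proof.
move=> dm; apply/eqP; rewrite eqn_leq; apply/andP; split.
  apply: leq_trans (mmeasureD_le _ _ _) _; rewrite msizeX geq_max leqnn /=.
  by apply: leq_trans (_ : (1 <= _)%N); [rewrite mmeasureC; case: (_ != 0)|].
apply: msize_mdeg_lt; rewrite mcoeff_msupp mcoeffD mcoeffX mcoeffC eqxx.
by rewrite -mdeg_eq0 eqn0Ngt dm mulr0 addr0 oner_neq0.
Qed.

Lemma msize_g (F : fieldType) n (f : {poly F}) : f != 0 ->
  msize (map_poly (@mpolyC n.+1 F) f).['X_(@ord_max n)] = size f.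
Proof.
move=> fn0.
have E : (map_poly (@mpolyC n.+1 F) f).['X_(@ord_max n)] =
   \sum_(i < size f) f`_i *: 'X_[U_(@ord_max n) *+ i].
  rewrite horner_coef size_map_poly; apply: eq_bigr => i _.
  by rewrite coef_map /= mul_mpolyC mpolyXn.
have hd : forall i, mdeg (U_(@ord_max n) *+ i) = i by move=> i; rewrite mdegMn mdeg1 mul1n.
rewrite E; apply/eqP; rewrite eqn_leq; apply/andP; split.
  apply: leq_trans (mmeasure_sum _ _ _ _) _.
  apply/bigmax_leqP => i _; apply: leq_trans (msizeZ_le _ _) _.
  by rewrite msizeX hd.
have sf : (0 < size f)%N by rewrite size_poly_gt0.
have := @msize_mdeg_lt _ _ (\sum_(i < size f) f`_i *: 'X_[U_(@ord_max n) *+ i]) (U_(@ord_max n) *+ (size f).-1).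
rewrite hd prednK //; apply.
rewrite mcoeff_msupp raddf_sum /=.
have hlt : ((size f).-1 < size f)%N by rewrite prednK.
rewrite (bigD1 (Ordinal hlt)) //=.
rewrite big1 ?addr0.
  by rewrite mcoeffZ mcoeffX eqxx mulr1 -lead_coefE lead_coef_eq0.
move=> i ni; rewrite mcoeffZ mcoeffX.
case: eqP => [e|]; last by rewrite mulr0.
by case/eqP: ni; apply: val_inj => /=; rewrite -(hd i) e hd.
Qed.

Theorem mainTheorem8 (F : finFieldType) (r n : nat) (alpha : F) (f : {poly F}) :
  #|F| = (2 ^ r)%N -> (1 < r)%N -> odd r -> (1 <= n)%N ->
  alpha != 0 -> alpha != 1 ->
  is_univ_pp f -> size f = (#|F|.-2).+1 ->
  is_multi_pp (hpoly n alpha f) /\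
  msize (hpoly n alpha f) = (n * #|F|.-1 + #|F|.-2).+1.
Proof.
move=> cardF r1 _ n1 a0 a1 fpp sf.
have q2 := finNzRing_gt1 F.
have ch2 : 2 \in [pchar F] by apply: (card_finPcharP cardF).
have two0 : (1 + 1 : F) = 0 by have := pcharf0 ch2; rewrite -(natrD _ 1 1).
split.
  apply: pp_part => //; apply: contra a1 => /eqP e.
  apply/eqP; rewrite -[alpha]add0r -two0 -addrA e addr0 //.
have fn0 : f != 0 by rewrite -size_poly_gt0 sf.
have nz (p : {mpoly F[n.+1]}) : msize p != 0%N -> p != 0.
  by apply: contraNneq => ->; rewrite msize0.
rewrite /hpoly.
rewrite mprodXnE.
set m := (\sum_(_ < n) _)%MM.
have dm : mdeg m = (n * #|F|.-1)%N.
  rewrite /m mdeg_sum; under eq_bigr do rewrite mdegMn mdeg1 mul1n.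
  by rewrite sum_nat_const card_ord.
have dm0 : (0 < mdeg m)%N by rewrite dm muln_gt0 n1 /=; case: #|F| q2 => [|[|[]]].
rewrite msizeM ?nz ?msize_XC ?msize_g //.
rewrite dm sf addSn /= addnS //.
by rewrite sf.
Qed.
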